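(* Let $V$ be a finite-dimensional vector space over a field of characteristic $\neq2$ and let $\mathcal S\subseteq V$. Let $\mathcal H'\neq\mathcal H''$ be two distinct linear hyperplanes of $V$ such that $\mathcal S'=\mathcal S\cap\mathcal H'$ is perfect in $\mathcal H'$ and $\mathcal S''=\mathcal S\cap\mathcal H''$ is perfect in $\mathcal H''$. Suppose moreover that $\mathcal S\setminus(\mathcal S'\cup\mathcal S'')$ is non-empty. Then $\mathcal S$ is perfect in $V$.
   Context: A subset $\mathcal P$ of a vector space $W$ of finite dimension $n$ over a field of characteristic $\neq2$ is perfect (in $W$) if $\{v\otimes v\}_{v\in\mathcal P}$ spans the $\binom{n+1}{2}$-dimensional space of all symmetric tensors in $W\otimes W$. *)

(* Defs.v *)
(* V is modelled as the row space 'rV[F]_n; a subspace W of V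
   is represented (mxalgebra style) by a square matrix whose row space is W.
   V (x) V is modelled as 'M[F]_n via  u (x) v  |->  u^T *m v. *)
From HB Require Import structures.
From mathcomp Require Import all_boot all_order all_algebra.
Set Implicit Arguments. Unset Strict Implicit. Unset Printing Implicit Defensive.
Import GRing.Theory.
Local Open Scope ring_scope.

Definition sqtensor (F : fieldType) (n : nat) (v : 'rV[F]_n) : 'M[F]_n :=
  v^T *m v.

(* symmetric tensors of W (x) W, inside V (x) V: symmetric matrices whose rows
   and columns lie in W *)
Definition sym_tensor (F : fieldType) (n : nat) (W : 'M[F]_n) (M : 'M[F]_n) : bool :=
  [&& M^T == M, (M <= W)%MS & (M^T <= W)%MS].

Definition perfect (F : fieldType) (n : nat) (P : pred 'rV[F]_n) (W : 'M[F]_n) : Prop :=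
  (forall v, P v -> (v <= W)%MS) /\
  forall M : 'M[F]_n, sym_tensor W M ->
    exists (k : nat) (v : 'I_k -> 'rV[F]_n) (c : 'I_k -> F),
      (forall i, P (v i)) /\ M = \sum_(i < k) c i *: sqtensor (v i).

Definition hyperplane (F : fieldType) (n : nat) (H : 'M[F]_n) : Prop :=
  (\rank H).+1 = n.

(* Main.v *)
Require Import Defs.
From HB Require Import structures.
From mathcomp Require Import all_boot all_order all_algebra.
From mathcomp Require Import zify.
Import GRing.Theory.
Local Open Scope ring_scope.

Section Aux.
Variables (F : fieldType) (n : nat).

Definition spanS (S : pred 'rV[F]_n) (M : 'M[F]_n) : Prop :=
  exists (k : nat) (v : 'I_k -> 'rV[F]_n) (c : 'I_k -> F),
      (forall i, S (v i)) /\ M = \sum_(i < k) c i *: sqtensor (v i).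

Lemma spanS_add S M1 M2 : spanS S M1 -> spanS S M2 -> spanS S (M1 + M2).
Proof.
move=> [k1 [v1 [c1 [h1 ->]]]] [k2 [v2 [c2 [h2 ->]]]].
exists (k1 + k2)%N,
  (fun i => match split i with inl j => v1 j | inr j => v2 j end),
  (fun i => match split i with inl j => c1 j | inr j => c2 j end).
split; first by move=> i; case: (split i).
rewrite big_split_ord /=; congr (_ + _); apply: eq_bigr => i _.
  by rewrite (unsplitK (inl _ i)).
by rewrite (unsplitK (inr _ i)).
Qed.

Lemma spanS_one (S : pred 'rV[F]_n) v c : S v -> spanS S (c *: sqtensor v).
Proof.
move=> Sv; exists 1%N, (fun _ => v), (fun _ => c); split => //.
by rewrite big_ord1.
Qed.

Lemma spanS_mono (S1 S2 : pred 'rV[F]_n) M :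
  (forall v, S1 v -> S2 v) -> spanS S1 M -> spanS S2 M.
Proof.
move=> h [k [v [c [hv ->]]]]; exists k, v, c; split => // i; exact: h.
Qed.

Lemma cast1_eq0 r (e : r = 1%N) m (X : 'M[F]_(m, r)) :
  (X == 0) = (X *m (const_mx 1 : 'M[F]_(r, 1)) == 0).
Proof.
subst r; congr (_ == 0); apply/matrixP => i j.
by rewrite !mxE big_ord1 mxE mulr1 (ord1 j).
Qed.

Lemma hyp_functional (H : 'M[F]_n) : hyperplane H ->
  exists f : 'cV[F]_n, forall m (M : 'M[F]_(m, n)), (M <= H)%MS = (M *m f == 0).
Proof.
move=> hH.
have rk : \rank (cokermx H) = 1%N.
  rewrite mxrank_coker; move: hH; rewrite /hyperplane; lia.
exists (col_base (cokermx H) *m (const_mx 1 : 'M[F]_(\rank (cokermx H), 1))) => m M.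
rewrite submxE -{1}(mulmx_base (cokermx H)) mulmxA mulmx_free_eq0 ?row_base_free //.
by rewrite (cast1_eq0 _ rk) mulmxA.
Qed.

End Aux.

Theorem proposition2p3 (F : fieldType) (n : nat) (S : pred 'rV[F]_n)
    (H1 H2 : 'M[F]_n) :
  (2%:R : F) != 0 ->
  hyperplane H1 -> hyperplane H2 -> ~~ (H1 == H2)%MS ->
  perfect [pred v | S v && (v <= H1)%MS] H1 ->
  perfect [pred v | S v && (v <= H2)%MS] H2 ->
  (exists v, [/\ S v, ~~ (v <= H1)%MS & ~~ (v <= H2)%MS]) ->
  perfect S 1%:M.
Proof.
move=> _ hH1 hH2 neq [_ P1] [_ P2] [v [Sv v1 v2]].
have [f1 hf1] := @hyp_functional F n H1 hH1.
have [f2 hf2] := @hyp_functional F n H2 hH2.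
have nH21 : ~~ (H2 <= H1)%MS.
  apply/negP => s21; move: neq; rewrite s21 andbT.
  have eqr : \rank H2 = \rank H1.
    by apply: succn_inj; move: hH1 hH2; rewrite /hyperplane => -> ->.
  by rewrite -(mxrank_leqif_sup s21).2 eqr eqxx.
have [i0 ni0] : exists i, ~~ (row i H2 <= H1)%MS.
  apply/existsP; move: nH21; apply: contraR; rewrite negb_exists => /forallP h.
  by apply/row_subP => i; have := h i; rewrite negbK.
set u0 := row i0 H2.
set a := (u0 *m f1) 0 0.
have u0f1 : u0 *m f1 = a%:M by rewrite {1}[u0 *m f1]mx11_scalar.
have a0 : a != 0.
  apply: contra ni0 => /eqP a0; rewrite hf1 u0f1 a0.
  by apply/eqP/matrixP => i j; rewrite !mxE mul0rn.
set u1 := a^-1 *: u0.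
have u1f1 : u1 *m f1 = 1%:M.
  by rewrite -scalemxAl u0f1 scale_scalar_mx mulVf.
have u1f2 : u1 *m f2 = 0.
  by apply/eqP; rewrite -hf2 /u1 scalemx_sub // row_sub.
split; first by move=> w _; exact: submx1.
move=> M /and3P [/eqP MT _ _].
set a1 := (v *m f1) 0 0.
set a2 := (v *m f2) 0 0.
have vf1 : v *m f1 = a1%:M by rewrite {1}[v *m f1]mx11_scalar.
have vf2 : v *m f2 = a2%:M by rewrite {1}[v *m f2]mx11_scalar.
have a10 : a1 != 0.
  apply: contra v1 => /eqP e; rewrite hf1 vf1 e.
  by apply/eqP/matrixP => i j; rewrite !mxE mul0rn.
have a20 : a2 != 0.
  apply: contra v2 => /eqP e; rewrite hf2 vf2 e.
  by apply/eqP/matrixP => i j; rewrite !mxE mul0rn.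
set c := (f1^T *m M *m f2) 0 0 / (a1 * a2).
set M0 := M - c *: sqtensor v.
have M0T : M0^T = M0.
  by rewrite /M0 linearB /= linearZ /= MT /sqtensor trmx_mul trmxK.
have M0f : f1^T *m M0 *m f2 = 0.
  rewrite /M0 mulmxBr mulmxBl -scalemxAr -scalemxAl /sqtensor.
  rewrite !mulmxA -trmx_mul vf1 -[(a1%:M)^T *m v *m f2]mulmxA vf2 tr_scalar_mx -scalar_mxM.
  rewrite {1}[f1^T *m M *m f2]mx11_scalar -scalemx1 -[(a1 * a2)%:M]scalemx1.
  by rewrite scalerA /c mulfVK ?mulf_neq0 // subrr.
set P := 1%:M - f1 *m u1.
have Pf1 : P *m f1 = 0 by rewrite /P mulmxBl mul1mx -mulmxA u1f1 mulmx1 subrr.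
have Pf2 : P *m f2 = f2 by rewrite /P mulmxBl mul1mx -mulmxA u1f2 mulmx0 subr0.
set A := P^T *m M0 *m P.
have AT : A^T = A by rewrite /A !trmx_mul trmxK M0T mulmxA.
have A1 : sym_tensor H1 A.
  apply/and3P; split; first by rewrite AT.
    by rewrite hf1 /A -!mulmxA Pf1 !mulmx0.
  by rewrite AT hf1 /A -!mulmxA Pf1 !mulmx0.
set B := M0 - A.
have BT : B^T = B by rewrite /B linearB /= AT M0T.
have eA : A *m f2 = P^T *m (M0 *m f2) by rewrite /A -!mulmxA Pf2.
have eP : 1%:M - P^T = u1^T *m f1^T.
  by rewrite /P linearB /= trmx1 trmx_mul subKr.
have Bf2 : B *m f2 = 0.
  rewrite /B mulmxBl eA -{1}[M0 *m f2]mul1mx -mulmxBl eP.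
  by rewrite -mulmxA [f1^T *m (M0 *m f2)]mulmxA M0f mulmx0.
have B2 : sym_tensor H2 B.
  apply/and3P; split; first by rewrite BT.
    by rewrite hf2 Bf2.
  by rewrite BT hf2 Bf2.
have -> : M = A + B + c *: sqtensor v by rewrite /B [A + _]addrC subrK /M0 subrK.
apply: spanS_add; last exact: spanS_one.
apply: spanS_add.
  apply: (@spanS_mono _ _ [pred w | S w && (w <= H1)%MS]); last exact: P1.
  by move=> w /andP[].
apply: (@spanS_mono _ _ [pred w | S w && (w <= H2)%MS]); last exact: P2.
by move=> w /andP[].
Qed.
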